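(* After the change of variables $g=g(\bar f,\bar g)$ given by relation (B), the curve in $(\bar f,\bar g)$ defined by $L_{1u}=0$ passes through the points $\bar Q(z)$ and $\bar Q(z/q)$, where $\bar Q(u)=(\bar f,\bar g)$ is defined by $\bar f=\bar f(u)$ and $$\frac{\bar g-\bar g(u)}{\bar g-\bar g(\frac{h_1}{qu})}=\frac{\bar Y(qu)}{\bar Y(u)},$$ for $u=z$ and $u=z/q$.
   Context: Let $h_1,h_2,u_1,\dots,u_8$ be generic nonzero complex parameters, $z$ generic, and $q=h_1^2h_2^2/(u_1\cdots u_8)$. Put $f(u)=u+h_1/u$, $g(u)=u+h_2/u$, $\bar f(u)=u+\frac{h_1}{qu}$, $\bar g(u)=u+\frac{h_2q}{u}$. Let $\varphi_u=(\bar f-g)\big(\frac{q\bar f}{h_1}-\frac{g}{h_2}\big)-(\frac{h_1}{q}-h_2)\big(\frac q{h_1}-\frac1{h_2}\big)$. Let $U(z)=\prod_{i=1}^8(z-u_i)=\sum_{i=0}^8(-1)^i m_{8-i}z^i$ (so $m_0=1$, $m_8=h_1^2h_2^2/q$). For a parameter $h$ define polynomials in a variable $x$: $P_n(h,x)=m_0x^4-m_1x^3+(m_2-3hm_0-h^{-3}m_8)x^2+(2hm_1-m_3+h^{-2}m_7)x+(h^2m_0-hm_2+m_4-h^{-1}m_6+h^{-2}m_8)$, $P_d(h,x)=m_8x^4-hm_7x^3+(h^2m_6-3hm_8-h^5m_0)x^2+(2h^2m_7-h^3m_5+h^5m_1)x+(h^6m_0-h^5m_2+h^4m_4-h^3m_6+h^2m_8)$.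 Define, for variables $f_0,f,g$, $V(f_0,f)=q\Big[(f_0-g)(f-g)-\big(\tfrac{h_1}{q}-h_2\big)(h_1-h_2)\tfrac1{h_2}\Big]P_d(h_2,g)-h_1^2h_2^4\Big[\big(\tfrac{f_0q}{h_1}-\tfrac{g}{h_2}\big)\big(\tfrac{f}{h_1}-\tfrac{g}{h_2}\big)-\big(\tfrac{q}{h_1}-\tfrac1{h_2}\big)\big(\tfrac1{h_1}-\tfrac1{h_2}\big)h_2\Big]P_n(h_2,g)$ (it also depends on $g$). For a function $\bar Y$ of $z$ and variables $(\bar f,g)$ define $$L_{1u}=\frac{U(\frac zq)}{(z^2-h_1q^2)\{\bar f-\bar f(\frac zq)\}}\Big[\bar Y(\tfrac zq)-\frac{z^8}{h_1^4q^4}\frac{U(\frac{h_1}{z})}{U(\frac zq)}\frac{g-g(\frac zq)}{g-g(\frac{h_1}{z})}\bar Y(z)\Big]+\frac{z^8U(\frac{h_1}{qz})}{(qz^2-h_1)h_1^4\{\bar f-\bar f(z)\}}\Big[\bar Y(qz)-\frac{h_1^4}{q^4z^8}\frac{U(z)}{U(\frac{h_1}{qz})}\frac{g-g(\frac{h_1}{qz})}{g-g(z)}\bar Y(z)\Big]+\frac{(h_1-h_2q)z^2(z^2-h_1)V(\bar f,f(z))}{h_1^3h_2^3q^5\,g\,\varphi_u\{g-g(\frac{h_1}{z})\}\{g-g(z)\}}\bar Y(z).$$ Relation (B), defining a birational correspondence $g\leftrightarrow\bar g$ depending on $\bar f$: $$\frac{(\bar f-\bar g)(\bar f-g)-(\frac{h_1}{q}-h_2q)(\frac{h_1}{q}-h_2)\frac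 q{h_1}}{(\frac{\bar fq}{h_1}-\frac{\bar g}{h_2q})(\frac{\bar fq}{h_1}-\frac g{h_2})-(\frac q{h_1}-\frac1{h_2q})(\frac q{h_1}-\frac1{h_2})\frac{h_1}q}=\frac{h_1^4h_2^2}{q^3}\frac{P_n(\frac{h_1}q,\bar f)}{P_d(\frac{h_1}q,\bar f)}.$$ *)

(* Defs.v *)
(* Definitions for Lemma 6 (curve L_{1u} = 0 and the points
   \bar Q(z), \bar Q(z/q)).  The complex numbers are modelled by an arbitrary
   numeric algebraically closed field R (e.g. algC, or C). *)
From HB Require Import structures.
From mathcomp Require Import all_boot all_order all_algebra.
Set Implicit Arguments. Unset Strict Implicit. Unset Printing Implicit Defensive.
Import Order.TTheory GRing.Theory Num.Theory.
Local Open Scope ring_scope.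

Section Lemma6Defs.
Variable R : numClosedFieldType.

Definition qpar (h1 h2 : R) (u : 'I_8 -> R) : R :=
  h1 ^+ 2 * h2 ^+ 2 / \prod_(i < 8) u i.

Definition Ufun (u : 'I_8 -> R) (x : R) : R := \prod_(i < 8) (x - u i).

(* U as a polynomial; U(z) = sum_i (-1)^i m_{8-i} z^i, i.e.
   m_k = (-1)^k * (coefficient of z^(8-k) in U). *)
Definition Upoly (u : 'I_8 -> R) : {poly R} := \prod_(i < 8) ('X - (u i)%:P).
Definition mcoef (u : 'I_8 -> R) (k : nat) : R :=
  (-1) ^+ k * (Upoly u)`_(8 - k).

Definition ff (h1 : R) (x : R) : R := x + h1 / x.
Definition gg (h2 : R) (x : R) : R := x + h2 / x.
Definition ffb (h1 q : R) (x : R) : R := x + h1 / (q * x).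
Definition ggb (h2 q : R) (x : R) : R := x + h2 * q / x.

Definition Pn (u : 'I_8 -> R) (h x : R) : R :=
  let m := mcoef u in
  m 0%N * x ^+ 4 - m 1%N * x ^+ 3
  + (m 2%N - 3%:R * h * m 0%N - h ^- 3 * m 8%N) * x ^+ 2
  + (2%:R * h * m 1%N - m 3%N + h ^- 2 * m 7%N) * x
  + (h ^+ 2 * m 0%N - h * m 2%N + m 4%N - h^-1 * m 6%N + h ^- 2 * m 8%N).

Definition Pd (u : 'I_8 -> R) (h x : R) : R :=
  let m := mcoef u in
  m 8%N * x ^+ 4 - h * m 7%N * x ^+ 3
  + (h ^+ 2 * m 6%N - 3%:R * h * m 8%N - h ^+ 5 * m 0%N) * x ^+ 2
  + (2%:R * h ^+ 2 * m 7%N - h ^+ 3 * m 5%N + h ^+ 5 * m 1%N) * x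
  + (h ^+ 6 * m 0%N - h ^+ 5 * m 2%N + h ^+ 4 * m 4%N - h ^+ 3 * m 6%N
     + h ^+ 2 * m 8%N).

Definition phiu (h1 h2 q fb g : R) : R :=
  (fb - g) * (q * fb / h1 - g / h2) - (h1 / q - h2) * (q / h1 - 1 / h2).

Definition Vfun (h1 h2 : R) (u : 'I_8 -> R) (f0 f g : R) : R :=
  let q := qpar h1 h2 u in
  q * ((f0 - g) * (f - g) - (h1 / q - h2) * (h1 - h2) / h2) * Pd u h2 g
  - h1 ^+ 2 * h2 ^+ 4 *
    ((f0 * q / h1 - g / h2) * (f / h1 - g / h2)
     - (q / h1 - 1 / h2) * (1 / h1 - 1 / h2) * h2) * Pn u h2 g.

Definition T1res (h1 h2 : R) (u : 'I_8 -> R) (Yb : R -> R) (z g : R) : R :=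
  let q := qpar h1 h2 u in
  Ufun u (z / q) / (z ^+ 2 - h1 * q ^+ 2) *
  (Yb (z / q) - z ^+ 8 / (h1 ^+ 4 * q ^+ 4) * (Ufun u (h1 / z) / Ufun u (z / q))
                * ((g - gg h2 (z / q)) / (g - gg h2 (h1 / z))) * Yb z).

Definition T2res (h1 h2 : R) (u : 'I_8 -> R) (Yb : R -> R) (z g : R) : R :=
  let q := qpar h1 h2 u in
  z ^+ 8 * Ufun u (h1 / (q * z)) / ((q * z ^+ 2 - h1) * h1 ^+ 4) *
  (Yb (q * z) - h1 ^+ 4 / (q ^+ 4 * z ^+ 8) * (Ufun u z / Ufun u (h1 / (q * z)))
                * ((g - gg h2 (h1 / (q * z))) / (g - gg h2 z)) * Yb z).

Definition T3 (h1 h2 : R) (u : 'I_8 -> R) (Yb : R -> R) (z fb g : R) : R :=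
  let q := qpar h1 h2 u in
  (h1 - h2 * q) * z ^+ 2 * (z ^+ 2 - h1) * Vfun h1 h2 u fb (ff h1 z) g /
  (h1 ^+ 3 * h2 ^+ 3 * q ^+ 5 * g * phiu h1 h2 q fb g
   * (g - gg h2 (h1 / z)) * (g - gg h2 z)) * Yb z.

Definition L1u (h1 h2 : R) (u : 'I_8 -> R) (Yb : R -> R) (z fb g : R) : R :=
  let q := qpar h1 h2 u in
  T1res h1 h2 u Yb z g / (fb - ffb h1 q (z / q))
  + T2res h1 h2 u Yb z g / (fb - ffb h1 q z)
  + T3 h1 h2 u Yb z fb g.

(* Local equations of the curve L_{1u} = 0 near the polar lines
   fbar = fbar(z) and fbar = fbar(z/q): L_{1u} multiplied by the vanishing
   polar factor, with the cancellation carried out, i.e.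
   L1u_at_z fb g = (fb - fbar(z)) * L1u fb g  and
   L1u_at_zq fb g = (fb - fbar(z/q)) * L1u fb g  (for fb off the polar line). *)
Definition L1u_at_z (h1 h2 : R) (u : 'I_8 -> R) (Yb : R -> R) (z fb g : R) : R :=
  let q := qpar h1 h2 u in
  (fb - ffb h1 q z) *
    (T1res h1 h2 u Yb z g / (fb - ffb h1 q (z / q)) + T3 h1 h2 u Yb z fb g)
  + T2res h1 h2 u Yb z g.

Definition L1u_at_zq (h1 h2 : R) (u : 'I_8 -> R) (Yb : R -> R) (z fb g : R) : R :=
  let q := qpar h1 h2 u in
  (fb - ffb h1 q (z / q)) *
    (T2res h1 h2 u Yb z g / (fb - ffb h1 q z) + T3 h1 h2 u Yb z fb g)
  + T1res h1 h2 u Yb z g.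

Definition BnumL (h1 h2 q fb gb g : R) : R :=
  (fb - gb) * (fb - g) - (h1 / q - h2 * q) * (h1 / q - h2) * q / h1.
Definition BdenL (h1 h2 q fb gb g : R) : R :=
  (fb * q / h1 - gb / (h2 * q)) * (fb * q / h1 - g / h2)
  - (q / h1 - 1 / (h2 * q)) * (q / h1 - 1 / h2) * h1 / q.
Definition relB (h1 h2 : R) (u : 'I_8 -> R) (fb gb g : R) : Prop :=
  let q := qpar h1 h2 u in
  BnumL h1 h2 q fb gb g / BdenL h1 h2 q fb gb g
  = h1 ^+ 4 * h2 ^+ 2 / q ^+ 3 * (Pn u (h1 / q) fb / Pd u (h1 / q) fb).

Definition QbarPt (h1 h2 : R) (u : 'I_8 -> R) (Yb : R -> R) (w fb gb : R) : Prop :=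
  let q := qpar h1 h2 u in
  fb = ffb h1 q w /\
  (gb - ggb h2 q w) / (gb - ggb h2 q (h1 / (q * w))) = Yb (q * w) / Yb w.

End Lemma6Defs.

(* Main.v *)
Require Import Defs.
From HB Require Import structures.
From mathcomp Require Import all_boot all_order all_algebra.
From Stdlib Require Import Ring Field BinNat BinPos Pnat Lia.
Import Order.TTheory GRing.Theory Num.Theory.
Local Open Scope ring_scope.

Section S.
Variable R : numClosedFieldType.
Notation TT := (GRing.PzSemiRing.sort (Num_ClosedField__to__GRing_PzSemiRing R)).
Notation ADD := (@Algebra.add (Num_ClosedField__to__Algebra_BaseAddMagma R)).
Notation OPP := (@Algebra.opp (Num_ClosedField__to__Algebra_BaseZmodule R)).
Notation MUL := (@GRing.mul (Num_ClosedField__to__GRing_PzSemiRing R)).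
Notation INV := (@GRing.inv (Num_ClosedField__to__GRing_UnitRing R)).
Notation ZERO := (@Algebra.zero (Num_ClosedField__to__Algebra_BaseAddUMagma R)).
Notation ONE := (GRing.one (Num_ClosedField__to__GRing_PzSemiRing R)).
Notation EXP := (@GRing.exp (Num_ClosedField__to__GRing_PzSemiRing R)).

Lemma FT : @field_theory TT ZERO ONE ADD MUL (fun x y => ADD x (OPP y)) OPP (fun x y => MUL x (INV y)) INV (@eq TT).
Proof.
split=> //.
  split=> //; [exact: add0r|exact: addrC|exact: addrA|exact: mul1r|exact: mulrC|exact: mulrA|exact: mulrDl|exact: subrr].
  by apply/eqP; rewrite oner_eq0.
by move=> p /eqP hp; rewrite mulVf.
Qed.

Lemma powpos (r : TT) p : pow_pos MUL r p = EXP r (Pos.to_nat p).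
Proof.
elim: p => [p IH|p IH|] /=.
- rewrite Pos2Nat.inj_xI IH /= exprS -exprD. congr (_ * _ ^+ _). rewrite /= -plusE; lia.
- rewrite Pos2Nat.inj_xO IH -exprD. congr (_ ^+ _). rewrite -plusE; lia.
- by rewrite expr1.
Qed.

Lemma PT : power_theory ONE MUL (@eq TT) N.to_nat EXP.
Proof. constructor=> r [|p] /=; first by rewrite expr0. by rewrite powpos. Qed.

Ltac Rpow_tac t :=
  match isnatcst t with
  | false => constr:(InitialRing.NotConstant)
  | _ => constr:(N.of_nat t)
  end.

Add Field RF : FT (power_tac PT [Rpow_tac]).

Ltac canon0 :=
  repeat match goal with
  | |- context [@Algebra.add ?i] => progress change (@Algebra.add i) with ADD
  | |- context [@Algebra.opp ?i] => progress change (@Algebra.opp i) with OPP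
  | |- context [@Algebra.zero ?i] => progress change (@Algebra.zero i) with ZERO
  | |- context [@GRing.mul ?i] => progress change (@GRing.mul i) with MUL
  | |- context [@GRing.one ?i] => progress change (@GRing.one i) with ONE
  | |- context [@GRing.inv ?i] => progress change (@GRing.inv i) with INV
  | |- context [@GRing.exp ?i] => progress change (@GRing.exp i) with EXP
  | |- @eq ?T ?a ?b => progress change (@eq TT a b)
  end.
Lemma one_eq (a b : TT) : MUL ONE a = MUL ONE b -> a = b.
Proof. by rewrite !mul1r. Qed.
Ltac canon := apply: one_eq; canon0.
Ltac fld := canon; field; repeat split; try assumption.




Lemma Ufun_coef (u : 'I_8 -> R) x : Ufun u x = \sum_(i < 9) (Upoly u)`_i * x ^+ i.
Proof.
rewrite /Ufun -horner_coef_wide.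
  rewrite /Upoly horner_prod; apply: eq_bigr => i _; by rewrite hornerXsubC.
by rewrite /Upoly size_prod_XsubC /index_enum -enumT size_enum_ord.
Qed.

Ltac unfold_m u :=
  rewrite /mcoef !Ufun_coef !big_ord_recr !big_ord0 /=;
  change (8 - 0)%N with 8%N; change (8 - 1)%N with 7%N; change (8 - 2)%N with 6%N;
  change (8 - 3)%N with 5%N; change (8 - 4)%N with 4%N; change (8 - 5)%N with 3%N;
  change (8 - 6)%N with 2%N; change (8 - 7)%N with 1%N; change (8 - 8)%N with 0%N;
  rewrite !mulrS !mulr0n;
  set c0 := (Upoly u)`_0; set c1 := (Upoly u)`_1; set c2 := (Upoly u)`_2;
  set c3 := (Upoly u)`_3; set c4 := (Upoly u)`_4; set c5 := (Upoly u)`_5;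
  set c6 := (Upoly u)`_6; set c7 := (Upoly u)`_7; set c8 := (Upoly u)`_8.

Lemma Pn_eq (u : 'I_8 -> R) (h x : R) : h != 0 -> x != 0 -> x^+2 - h != 0 ->
  Pn u h (x + h/x) = (Ufun u x / x^+2 - x^+4 * Ufun u (h/x) / h^+3) / (x^+2 - h).
Proof.
move=> /eqP h0 /eqP x0 /eqP xh.
rewrite /Pn; unfold_m u. fld.
Qed.

Lemma Pd_eq (u : 'I_8 -> R) (h x : R) : h != 0 -> x != 0 -> x^+2 - h != 0 ->
  Pd u h (x + h/x) = (x ^+ 6 * Ufun u (h/x) - h ^+ 5 * Ufun u x / x ^+ 4) / (x^+2 - h).
Proof.
move=> /eqP h0 /eqP x0 /eqP xh.
rewrite /Pd; unfold_m u. fld.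
Qed.

Lemma core_id (h1 h2 q w Uw Uv gb g : R) : h1 != 0 -> h2 != 0 -> q != 0 -> w != 0 ->
  w ^+ 2 * q - h1 != 0 ->
  BnumL h1 h2 q (w + h1 / q / w) gb g * ((w ^+ 6 * Uv - (h1/q) ^+ 5 * Uw / w ^+ 4) / (w ^+ 2 - h1 / q))
  - h1 ^+ 4 * h2 ^+ 2 / q ^+ 3 * ((Uw / w ^+ 2 - w ^+ 4 * Uv / (h1/q) ^+ 3) / (w ^+ 2 - h1/q))
    * BdenL h1 h2 q (w + h1 / q / w) gb g
  = - (w ^+ 2 + h1 / q) / ((w ^+ 2 - h1 / q) * q ^+ 4 * w ^+ 4) *
    (h1 ^+ 4 * Uw * (g - gg h2 (h1 / q / w)) * (gb - ggb h2 q (h1 / q / w))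
     - q ^+ 4 * w ^+ 8 * Uv * (g - gg h2 w) * (gb - ggb h2 q w)).
Proof.
move=> /eqP h10 /eqP h20 /eqP q0 /eqP w0 /eqP wh.
rewrite /BnumL /BdenL /gg /ggb. fld.
Qed.

Lemma ratio_lemma (N D P Q k : R) : D != 0 -> Q != 0 ->
  (N / D = k * (P / Q) <-> N * Q - k * P * D = 0).
Proof.
move=> /eqP D0 /eqP Q0.
have E : N * Q - k * P * D = D * Q * (N / D - k * (P / Q)) by fld.
rewrite E; split=> [->|]; first by rewrite subrr mulr0.
move/eqP; rewrite mulf_eq0 => /orP [|/eqP/subr0_eq //].
by rewrite mulf_eq0 => /orP [] /eqP.
Qed.

Lemma BdenL_aff (h1 h2 q fb gb g : R) : h1 != 0 -> h2 != 0 -> q != 0 ->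
  BdenL h1 h2 q fb gb (g + 1) + BdenL h1 h2 q fb gb (g - 1) = 2%:R * BdenL h1 h2 q fb gb g.
Proof. move=> /eqP h10 /eqP h20 /eqP q0. rewrite /BdenL !mulrS !mulr0n. fld. Qed.

Lemma fin1 (h1 q z Uz Uv g g1 g2 r Yz : R) : q != 0 -> z != 0 -> Uv != 0 -> g - g2 != 0 ->
  h1 ^+ 4 * Uz * (g - g1) = q ^+ 4 * z ^+ 8 * Uv * r * (g - g2) ->
  r * Yz - h1 ^+ 4 / (q ^+ 4 * z ^+ 8) * (Uz / Uv) * ((g - g1) / (g - g2)) * Yz = 0.
Proof.
move=> /eqP q0 /eqP z0 /eqP U0 /eqP g0 E.
have -> : r * Yz - h1 ^+ 4 / (q ^+ 4 * z ^+ 8) * (Uz / Uv) * ((g - g1) / (g - g2)) * Yz =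
  (q ^+ 4 * z ^+ 8 * Uv * r * (g - g2) - h1 ^+ 4 * Uz * (g - g1)) * (Yz / (q ^+ 4 * z ^+ 8 * Uv * (g - g2))).
  fld.
by rewrite -E subrr mul0r.
Qed.

Lemma fin2 (h1 q z Uq Uh g g1 g2 r Yq : R) : h1 != 0 -> q != 0 -> z != 0 -> Uq != 0 -> g - g1 != 0 ->
  h1 ^+ 4 * Uq * (g - g1) = q ^+ 4 * (z / q) ^+ 8 * Uh * r * (g - g2) ->
  Yq - z ^+ 8 / (h1 ^+ 4 * q ^+ 4) * (Uh / Uq) * ((g - g2) / (g - g1)) * (r * Yq) = 0.
Proof.
move=> /eqP h0 /eqP q0 /eqP z0 /eqP U0 /eqP g0 E.
have -> : Yq - z ^+ 8 / (h1 ^+ 4 * q ^+ 4) * (Uh / Uq) * ((g - g2) / (g - g1)) * (r * Yq) =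
  (h1 ^+ 4 * Uq * (g - g1) - q ^+ 4 * (z / q) ^+ 8 * Uh * r * (g - g2)) * (Yq / (h1 ^+ 4 * Uq * (g - g1))).
  fld.
by rewrite E subrr mul0r.
Qed.

Lemma two_neq0 : (2%:R : R) != 0.
Proof. by rewrite pnatr_eq0. Qed.

Lemma core (u : 'I_8 -> R) (q h1 h2 w gb g r : R) :
  qpar h1 h2 u = q ->
  h1 != 0 -> h2 != 0 -> q != 0 -> w != 0 -> w ^+ 2 * q - h1 != 0 ->
  gb - ggb h2 q w = r * (gb - ggb h2 q (h1 / (q * w))) ->
  gb != ggb h2 q (h1 / (q * w)) ->
  Pd u (h1 / q) (ffb h1 q w) != 0 ->
  BdenL h1 h2 q (ffb h1 q w) gb g != 0 ->
  (forall g', relB h1 h2 u (ffb h1 q w) gb g' <-> g' = g) ->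
  h1 ^+ 4 * Ufun u w * (g - gg h2 (h1 / (q * w)))
  = q ^+ 4 * w ^+ 8 * Ufun u (h1 / (q * w)) * r * (g - gg h2 w).
Proof.
move=> hq h10 h20 q0 w0 wq hgb hb hPd hD hU.
have vE : h1 / (q * w) = h1 / q / w by rewrite invfM mulrA.
have fE : ffb h1 q w = w + h1 / q / w by rewrite /ffb vE.
rewrite vE in hgb hb *. rewrite fE in hPd hD hU.
have wh : w ^+ 2 - h1 / q != 0.
  have -> : w ^+ 2 - h1 / q = (w ^+ 2 * q - h1) / q.
    move/eqP: q0 => q0'. fld.
  by rewrite mulf_neq0 ?invr_eq0.
have hh : h1 / q != 0 by rewrite mulf_neq0 ?invr_eq0.
have PnE := Pn_eq u (h1 / q) w hh w0 wh.
have PdE := Pd_eq u (h1 / q) w hh w0 wh.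
set fb := w + h1 / q / w in hPd hD hU PnE PdE.
set k := h1 ^+ 4 * h2 ^+ 2 / q ^+ 3.
set lam := - (w ^+ 2 + h1 / q) / ((w ^+ 2 - h1 / q) * q ^+ 4 * w ^+ 4).
set G := fun g' => h1 ^+ 4 * Ufun u w * (g' - gg h2 (h1 / q / w)) * (gb - ggb h2 q (h1 / q / w))
     - q ^+ 4 * w ^+ 8 * Ufun u (h1 / q / w) * (g' - gg h2 w) * (gb - ggb h2 q w).
have Phi : forall g', BnumL h1 h2 q fb gb g' * Pd u (h1 / q) fb - k * Pn u (h1 / q) fb * BdenL h1 h2 q fb gb g'
   = lam * G g'.
  move=> g'; rewrite PnE PdE /fb /lam /G /k. exact: core_id.
have relE : forall g', BdenL h1 h2 q fb gb g' != 0 ->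
    (relB h1 h2 u fb gb g' <-> lam * G g' = 0).
  move=> g' hD'. rewrite -Phi /relB /=. rewrite hq. exact: ratio_lemma.
have Gg : lam * G g = 0 by apply/(relE g hD)/(hU g).
have [hl|hl] := eqVneq (w ^+ 2 + h1 / q) 0.
  have lam0 : lam = 0 by rewrite /lam hl oppr0 mul0r.
  have all0 : forall g', relB h1 h2 u fb gb g' \/ BdenL h1 h2 q fb gb g' = 0.
    move=> g'. have [->|hD'] := eqVneq (BdenL h1 h2 q fb gb g') 0; first by right.
    by left; apply/(relE g' hD'); rewrite lam0 mul0r.
  have aff := BdenL_aff h1 h2 q fb gb g h10 h20 q0.
  exfalso.
  have [h1p|h1p] := eqVneq (BdenL h1 h2 q fb gb (g + 1)) 0.
    have hm : BdenL h1 h2 q fb gb (g - 1) != 0.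
      move: aff; rewrite h1p add0r => ->. by rewrite mulf_neq0 // two_neq0.
    case: (all0 (g - 1)) => [/hU|/eqP]; last by rewrite (negbTE hm).
    move/(congr1 (fun x => x - g)); rewrite addrAC subrr add0r => /eqP.
    by rewrite oppr_eq0 oner_eq0.
  case: (all0 (g + 1)) => [/hU|/eqP]; last by rewrite (negbTE h1p).
  move/(congr1 (fun x => x - g)); rewrite addrAC subrr add0r => /eqP.
  by rewrite oner_eq0.
have lamN0 : lam != 0.
  rewrite /lam mulf_neq0 // ?oppr_eq0 // invr_eq0 !mulf_neq0 // expf_neq0 //.
move/eqP: Gg; rewrite mulf_eq0 (negbTE lamN0) /= /G => /eqP/subr0_eq.
rewrite hgb => E.
have hb' : gb - ggb h2 q (h1 / q / w) != 0 by rewrite subr_eq0.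
apply: (mulIf hb'). rewrite E.
by rewrite mulrA (mulrAC _ _ r).
Qed.

Lemma lemma6_s (h1 h2 : R) (u : 'I_8 -> R) (z : R)
    (Yb : R -> R)
    (h1_neq0 : h1 != 0) (h2_neq0 : h2 != 0) (u_neq0 : forall i, u i != 0)
    (z_neq0 : z != 0)
    (gen_z : [/\ Ufun u z != 0, Ufun u (z / qpar h1 h2 u) != 0,
                 Ufun u (h1 / z) != 0 & Ufun u (h1 / (qpar h1 h2 u * z)) != 0])
    (gen_z2 : [/\ z ^+ 2 != h1, z ^+ 2 != h1 * qpar h1 h2 u ^+ 2
                & qpar h1 h2 u * z ^+ 2 != h1])
    (gen_Y : [/\ Yb (z / qpar h1 h2 u) != 0, Yb z != 0 & Yb (qpar h1 h2 u * z) != 0]) :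
  let q := qpar h1 h2 u in
  (forall gb g : R,
     QbarPt h1 h2 u Yb z (ffb h1 q z) gb ->
     gb != ggb h2 q (h1 / (q * z)) ->
     Pd u (h1 / q) (ffb h1 q z) != 0 ->
     BdenL h1 h2 q (ffb h1 q z) gb g != 0 ->
     (forall g', relB h1 h2 u (ffb h1 q z) gb g' <-> g' = g) ->
     g != gg h2 z ->
     L1u_at_z h1 h2 u Yb z (ffb h1 q z) g = 0)
  /\
  (forall gb g : R,
     QbarPt h1 h2 u Yb (z / q) (ffb h1 q (z / q)) gb ->
     gb != ggb h2 q (h1 / (q * (z / q))) ->
     Pd u (h1 / q) (ffb h1 q (z / q)) != 0 ->
     BdenL h1 h2 q (ffb h1 q (z / q)) gb g != 0 ->
     (forall g', relB h1 h2 u (ffb h1 q (z / q)) gb g' <-> g' = g) ->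
     g != gg h2 (h1 / z) ->
     L1u_at_zq h1 h2 u Yb z (ffb h1 q (z / q)) g = 0).
Proof.
cbv zeta.
set q := qpar h1 h2 u in gen_z gen_z2 gen_Y *.
case: gen_z => Uz0 Uzq0 Uhz0 Uhqz0.
case: gen_z2 => z2h1 z2h1q2 qz2h1.
case: gen_Y => Yzq0 Yz0 Yqz0.
have q0 : q != 0.
  rewrite /q /qpar mulf_neq0 ?invr_eq0 ?mulf_neq0 ?expf_neq0 //.
  by apply/prodf_neq0 => i _; apply: u_neq0.
split.
- move=> gb g [_ hQ] hb hPd hD hU hg2. rewrite -/q in hQ.
  have hb' : gb - ggb h2 q (h1 / (q * z)) != 0 by rewrite subr_eq0.
  have hgb : gb - ggb h2 q z = Yb (q * z) / Yb z * (gb - ggb h2 q (h1 / (q * z))).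
    by rewrite -hQ divfK.
  have wq : z ^+ 2 * q - h1 != 0 by rewrite mulrC subr_eq0.
  have E := @core u q h1 h2 z gb g _ erefl h1_neq0 h2_neq0 q0 z_neq0 wq hgb hb hPd hD hU.
  rewrite /L1u_at_z /T2res; cbv zeta; rewrite -/q subrr mul0r add0r.
  apply/eqP; rewrite mulf_eq0; apply/orP; right; apply/eqP.
  have -> : Yb (q * z) = Yb (q * z) / Yb z * Yb z by rewrite divfK.
  apply: fin1 => //. by rewrite subr_eq0.
- move=> gb g [_ hQ] hb hPd hD hU hg1. rewrite -/q in hQ.
  have qzq : q * (z / q) = z by rewrite mulrC divfK.
  have hb' : gb - ggb h2 q (h1 / (q * (z / q))) != 0 by rewrite subr_eq0.
  have hgb : gb - ggb h2 q (z / q) = Yb (q * (z / q)) / Yb (z / q) * (gb - ggb h2 q (h1 / (q * (z / q)))).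
    by rewrite -hQ divfK.
  rewrite /L1u_at_zq /T1res; cbv zeta; rewrite -/q subrr mul0r add0r.
  apply/eqP; rewrite mulf_eq0; apply/orP; right; apply/eqP.
  have -> : Yb z = Yb z / Yb (z / q) * Yb (z / q) by rewrite divfK.
  have [hz|hz] := eqVneq (z ^+ 2) (h1 * q).
    have hzE : h1 / z = z / q.
      have -> : h1 = z ^+ 2 / q by rewrite hz mulfK.
      move/eqP: q0 => q0'; move/eqP: z_neq0 => z0'. fld.
    rewrite qzq hzE in hb' hQ. rewrite hzE in hg1 *.
    rewrite divff // in hQ.
    have -> : Yb z / Yb (z / q) = 1 by rewrite -hQ.
    rewrite divff // divff ?subr_eq0 //.
    have -> : z ^+ 8 = (h1 * q) ^+ 4 by rewrite -hz -exprM.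
    move: (Yb (z / q)) => Y. move/eqP: h1_neq0 => h0; move/eqP: q0 => q0'. fld.
  have wq : (z / q) ^+ 2 * q - h1 != 0.
    have -> : (z / q) ^+ 2 * q - h1 = (z ^+ 2 - h1 * q) / q.
      move/eqP: q0 => q0'. fld.
    by rewrite mulf_neq0 ?invr_eq0 // subr_eq0.
  have zq0 : z / q != 0 by rewrite mulf_neq0 ?invr_eq0.
  have E := @core u q h1 h2 (z / q) gb g _ erefl h1_neq0 h2_neq0 q0 zq0 wq hgb hb hPd hD hU.
  rewrite qzq in E.
  apply: fin2 => //. by rewrite subr_eq0.
Qed.

End S.

Theorem lemma6 (R : numClosedFieldType) (h1 h2 : R) (u : 'I_8 -> R) (z : R)
    (Yb : R -> R)
    (* genericity of the parameters *)
    (h1_neq0 : h1 != 0) (h2_neq0 : h2 != 0) (u_neq0 : forall i, u i != 0)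
    (z_neq0 : z != 0)
    (gen_z : [/\ Ufun u z != 0, Ufun u (z / qpar h1 h2 u) != 0,
                 Ufun u (h1 / z) != 0 & Ufun u (h1 / (qpar h1 h2 u * z)) != 0])
    (gen_z2 : [/\ z ^+ 2 != h1, z ^+ 2 != h1 * qpar h1 h2 u ^+ 2
                & qpar h1 h2 u * z ^+ 2 != h1])
    (gen_Y : [/\ Yb (z / qpar h1 h2 u) != 0, Yb z != 0 & Yb (qpar h1 h2 u * z) != 0]) :
  let q := qpar h1 h2 u in
  (* the curve passes through \bar Q(z) *)
  (forall gb g : R,
     QbarPt h1 h2 u Yb z (ffb h1 q z) gb ->
     gb != ggb h2 q (h1 / (q * z)) ->
     Pd u (h1 / q) (ffb h1 q z) != 0 ->
     BdenL h1 h2 q (ffb h1 q z) gb g != 0 ->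
     (forall g', relB h1 h2 u (ffb h1 q z) gb g' <-> g' = g) ->
     g != gg h2 z ->
     L1u_at_z h1 h2 u Yb z (ffb h1 q z) g = 0)
  /\
  (* the curve passes through \bar Q(z/q) *)
  (forall gb g : R,
     QbarPt h1 h2 u Yb (z / q) (ffb h1 q (z / q)) gb ->
     gb != ggb h2 q (h1 / (q * (z / q))) ->
     Pd u (h1 / q) (ffb h1 q (z / q)) != 0 ->
     BdenL h1 h2 q (ffb h1 q (z / q)) gb g != 0 ->
     (forall g', relB h1 h2 u (ffb h1 q (z / q)) gb g' <-> g' = g) ->
     g != gg h2 (h1 / z) ->
     L1u_at_zq h1 h2 u Yb z (ffb h1 q (z / q)) g = 0).
Proof. exact: lemma6_s. Qed.
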